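(* Let $a_1,a_2\in\mathbb{R}^2$, let $e$ be a directed segment in $\mathbb{R}^2$ with supporting line $\ell$ (directed as $e$), and let $\rho>0$. Call the monotonicity predicate true if there exist points $p_1,p_2\in\ell$ with $p_1$ not after $p_2$ in the direction of $e$ such that $\|p_1-a_1\|\le\rho$ and $\|p_2-a_2\|\le\rho$. Consider: (d) $\ell$ intersects the circle of radius $\rho$ centered at $a_1$; (e) $\ell$ intersects the circle of radius $\rho$ centered at $a_2$; (f) the angle between the vector $a_2-a_1$ and the direction of $e$ is at most $\pi/2$; (g) $\|a_1-a_2\|\le 2\rho$. If $(d)\wedge(e)\wedge(f)$ is true, then the monotonicity predicate is true. Furthermore, if (g) is false, or if $\ell$ does not intersect the lens formed by the two closed disks of radius $\rho$ centered at $a_1$ and $a_2$ (their intersection), then $(d)\wedge(e)\wedge(f)$ is equivalent to the monotonicity predicate. *)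

(* Defs.v *)
From Stdlib Require Import Reals.
Open Scope R_scope.

Definition pt := (R * R)%type.

Definition vsub (p q : pt) : pt := (fst p - fst q, snd p - snd q).
Definition dot (u v : pt) : R := fst u * fst v + snd u * snd v.
Definition norm (u : pt) : R := sqrt (dot u u).
Definition pdist (p q : pt) : R := norm (vsub p q).

Record dseg := { tail : pt; head : pt }.
Definition dir (e : dseg) : pt := vsub (head e) (tail e).
Definition nondegenerate (e : dseg) : Prop := tail e <> head e.

Definition on_line (e : dseg) (p : pt) : Prop :=
  exists lam : R, p = (fst (tail e) + lam * fst (dir e),
                       snd (tail e) + lam * snd (dir e)).

Definition not_after (e : dseg) (p1 p2 : pt) : Prop :=
  0 <= dot (vsub p2 p1) (dir e).

Definition monotone (a1 a2 : pt) (e : dseg) (rho : R) : Prop :=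
  exists p1 p2 : pt, on_line e p1 /\ on_line e p2 /\ not_after e p1 p2 /\
    pdist p1 a1 <= rho /\ pdist p2 a2 <= rho.

Definition line_meets_circle (e : dseg) (a : pt) (rho : R) : Prop :=
  exists p : pt, on_line e p /\ pdist p a = rho.

Definition angle_le_right (u v : pt) : Prop := 0 <= dot u v.

Definition line_meets_lens (e : dseg) (a1 a2 : pt) (rho : R) : Prop :=
  exists p : pt, on_line e p /\ pdist p a1 <= rho /\ pdist p a2 <= rho.

(* Main.v *)
Require Import Defs.
From Stdlib Require Import Reals Lra Psatz.
Open Scope R_scope.

Lemma sqrt_le_iff X r : 0 <= X -> 0 < r -> (sqrt X <= r <-> X <= r*r).
Proof.
  intros HX Hr; split; intro H.
  - rewrite <- (sqrt_sqrt X HX). pose proof (sqrt_pos X). nra.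
  - rewrite <- (sqrt_square r) by lra. apply sqrt_le_1_alt; lra.
Qed.

Lemma sqrt_eq_iff X r : 0 <= X -> 0 < r -> (sqrt X = r <-> X = r*r).
Proof.
  intros HX Hr; split; intro H.
  - rewrite <- H. rewrite sqrt_sqrt; auto.
  - subst. apply sqrt_square; lra.
Qed.

Lemma sqn x : 0 <= x * x.
Proof. pose proof (Rle_0_sqr x); unfold Rsqr in *; lra. Qed.

Lemma dot_nonneg u : 0 <= dot u u.
Proof. unfold dot; nra. Qed.

Definition lp (e:dseg) (l:R) : pt :=
  (fst (tail e) + l * fst (dir e), snd (tail e) + l * snd (dir e)).
Definition Q e a l := dot (vsub (lp e l) a) (vsub (lp e l) a).
Definition U e := dot (dir e) (dir e).
Definition cc e a := dot (vsub a (tail e)) (dir e) / U e.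

Lemma U_pos e : nondegenerate e -> 0 < U e.
Proof.
  destruct e as [[s1 s2] [t1 t2]]; unfold nondegenerate, U, dot, dir, vsub; simpl.
  intro He. destruct (Rlt_dec 0 ((t1 - s1) * (t1 - s1) + (t2 - s2) * (t2 - s2))) as [h|h]; auto.
  apply Rnot_lt_le in h. exfalso; apply He. assert (t1 - s1 = 0) by (pose proof (Rle_0_sqr (t1-s1)); pose proof (Rle_0_sqr (t2-s2)); unfold Rsqr in *; nra). assert (t2 - s2 = 0) by (pose proof (Rle_0_sqr (t2-s2)); unfold Rsqr in *; nra).
  f_equal; lra.
Qed.

Lemma Q_eq e a l : nondegenerate e -> Q e a l = U e * ((l - cc e a) * (l - cc e a)) + Q e a (cc e a).
Proof.
  intro He. pose proof (U_pos e He) as HU.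
  destruct e as [[s1 s2] [t1 t2]]; destruct a as [x y].
  unfold Q, cc, U, lp in *; unfold dot, dir, vsub in *; simpl in *.
  field. lra.
Qed.

Lemma dot_diff e l1 l2 : dot (vsub (lp e l2) (lp e l1)) (dir e) = (l2 - l1) * U e.
Proof. unfold lp, U, dot, vsub; simpl; ring. Qed.

Lemma cc_diff e a1 a2 : nondegenerate e ->
  cc e a2 - cc e a1 = dot (vsub a2 a1) (dir e) / U e.
Proof.
  intro He. pose proof (U_pos e He) as HU.
  unfold cc. destruct a1, a2. unfold dot, vsub in *; simpl. field. lra.
Qed.

Lemma pdist_Q e a l : pdist (lp e l) a = sqrt (Q e a l).
Proof. reflexivity. Qed.

Lemma Q_nonneg e a l : 0 <= Q e a l.
Proof. apply dot_nonneg. Qed.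

Lemma circle_cc e a rho : nondegenerate e -> 0 < rho ->
  line_meets_circle e a rho -> Q e a (cc e a) <= rho * rho.
Proof.
  intros He Hr [p [[l Hl] Hd]]. subst p. fold (lp e l) in Hd.
  rewrite pdist_Q in Hd. apply sqrt_eq_iff in Hd; [|apply Q_nonneg|lra].
  rewrite (Q_eq e a l He) in Hd. pose proof (U_pos e He).
  assert (0 <= U e * ((l - cc e a) * (l - cc e a))) by (apply Rmult_le_pos; [lra|apply sqn]).
  lra.
Qed.

Lemma disk_circle e a rho l : nondegenerate e -> 0 < rho ->
  Q e a l <= rho * rho -> line_meets_circle e a rho.
Proof.
  intros He Hr Hq. pose proof (U_pos e He) as HU.
  rewrite (Q_eq e a l He) in Hq.
  set (c := cc e a) in *. set (q := Q e a c) in *.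
  assert (0 <= U e * ((l - c) * (l - c))) by (apply Rmult_le_pos; [lra|apply sqn]).
  set (t := sqrt ((rho * rho - q) / U e)).
  assert (Ht : t * t = (rho * rho - q) / U e).
  { unfold t; apply sqrt_sqrt. unfold Rdiv; apply Rmult_le_pos; [lra|left; apply Rinv_0_lt_compat; lra]. }
  exists (lp e (c + t)). split. { exists (c + t); reflexivity. }
  rewrite pdist_Q. apply sqrt_eq_iff; [apply Q_nonneg|lra|].
  rewrite (Q_eq e a _ He). fold c q.
  replace (c + t - c) with t by ring. rewrite Ht. field. lra.
Qed.

Theorem mainTheorem7 (a1 a2 : pt) (e : dseg) (rho : R)
  (He : nondegenerate e) (Hrho : 0 < rho) :
  let d := line_meets_circle e a1 rho in
  let ee := line_meets_circle e a2 rho in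
  let f := angle_le_right (vsub a2 a1) (dir e) in
  let g := pdist a1 a2 <= 2 * rho in
  ((d /\ ee /\ f) -> monotone a1 a2 e rho) /\
  ((~ g \/ ~ line_meets_lens e a1 a2 rho) ->
     ((d /\ ee /\ f) <-> monotone a1 a2 e rho)).
Proof.
  intros d ee f g. pose proof (U_pos e He) as HU.
  assert (P1 : (d /\ ee /\ f) -> monotone a1 a2 e rho).
  { intros [Hd [Hee Hf]].
    apply circle_cc in Hd; auto. apply circle_cc in Hee; auto.
    exists (lp e (cc e a1)), (lp e (cc e a2)).
    split; [eexists; reflexivity|]. split; [eexists; reflexivity|].
    split.
    - unfold not_after. rewrite dot_diff, cc_diff by auto.
      unfold f, angle_le_right in Hf.
      replace (dot (vsub a2 a1) (dir e) / U e * U e) with (dot (vsub a2 a1) (dir e)) by (field; lra).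
      lra.
    - rewrite !pdist_Q. split; apply sqrt_le_iff; auto using Q_nonneg. }
  split; auto. intros Hgl. split; auto.
  intros [p1 [p2 [[l1 Hl1] [[l2 Hl2] [Hna [H1 H2]]]]]].
  subst p1 p2. fold (lp e l1) in *. fold (lp e l2) in *.
  unfold not_after in Hna. rewrite dot_diff in Hna.
  assert (Hl : l1 <= l2) by nra.
  rewrite pdist_Q in H1, H2.
  apply sqrt_le_iff in H1; auto using Q_nonneg.
  apply sqrt_le_iff in H2; auto using Q_nonneg.
  split; [eapply disk_circle; eauto|]. split; [eapply disk_circle; eauto|].
  unfold f, angle_le_right.
  destruct (Rle_dec 0 (dot (vsub a2 a1) (dir e))) as [h|h]; auto. exfalso.
  assert (Hc : cc e a2 < cc e a1).
  { pose proof (cc_diff e a1 a2 He).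
    assert (dot (vsub a2 a1) (dir e) / U e < 0).
    { unfold Rdiv. apply Rmult_neg_pos; [lra|]. apply Rinv_0_lt_compat; lra. }
    lra. }
  pose proof (Q_eq e a1 l1 He) as E1. pose proof (Q_eq e a2 l2 He) as E2.
  assert (Hlens : line_meets_lens e a1 a2 rho).
  { destruct (Rle_dec l2 (cc e a1)) as [h2|h2].
    - exists (lp e l2). split; [eexists; reflexivity|].
      rewrite !pdist_Q. split; apply sqrt_le_iff; auto using Q_nonneg.
      rewrite (Q_eq e a1 l2 He).
      assert ((l2 - cc e a1) * (l2 - cc e a1) <= (l1 - cc e a1) * (l1 - cc e a1)) by nra.
      assert (U e * ((l2 - cc e a1) * (l2 - cc e a1)) <= U e * ((l1 - cc e a1) * (l1 - cc e a1))) by (apply Rmult_le_compat_l; lra).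
      lra.
    - exists (lp e (cc e a1)). split; [eexists; reflexivity|].
      rewrite !pdist_Q. split; apply sqrt_le_iff; auto using Q_nonneg.
      + assert (0 <= U e * ((l1 - cc e a1) * (l1 - cc e a1))) by (apply Rmult_le_pos; [lra|apply sqn]). lra.
      + rewrite (Q_eq e a2 (cc e a1) He).
        assert ((cc e a1 - cc e a2) * (cc e a1 - cc e a2) <= (l2 - cc e a2) * (l2 - cc e a2)) by nra.
        assert (U e * ((cc e a1 - cc e a2) * (cc e a1 - cc e a2)) <= U e * ((l2 - cc e a2) * (l2 - cc e a2))) by (apply Rmult_le_compat_l; lra).
        lra. }
  destruct Hgl as [Hg|Hg]; apply Hg; auto.
  destruct Hlens as [p [_ [D1 D2]]].
  unfold g, pdist, norm. unfold pdist, norm in D1, D2.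
  apply sqrt_le_iff in D1; auto using dot_nonneg.
  apply sqrt_le_iff in D2; auto using dot_nonneg.
  apply sqrt_le_iff; auto using dot_nonneg; try lra.
  destruct p as [px py], a1 as [x1 y1], a2 as [x2 y2].
  unfold dot, vsub in *; simpl in *.
  pose proof (sqn (px - x1 + (px - x2))). pose proof (sqn (py - y1 + (py - y2))).
  assert (E : (x1 - x2) * (x1 - x2) + (y1 - y2) * (y1 - y2) =
    2 * ((px - x1) * (px - x1) + (py - y1) * (py - y1)) + 2 * ((px - x2) * (px - x2) + (py - y2) * (py - y2))
    - ((px - x1 + (px - x2)) * (px - x1 + (px - x2)) + (py - y1 + (py - y2)) * (py - y1 + (py - y2)))) by ring.
  rewrite E. lra.
Qed.
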